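(* For all $n\ge1$, the number of permutations in $\mathcal{S}_n$ avoiding each of $1243$, $2143$ and $321$ equals $n+2\binom{n}{3}$.
   Context: A permutation $\pi\in\mathcal{S}_n$ avoids $\tau\in\mathcal{S}_k$ if there are no indices $i_1<\dots<i_k$ with $\pi_{i_1}\cdots\pi_{i_k}$ in the same relative order as $\tau_1\cdots\tau_k$. *)

(* Defs.v *)
From mathcomp Require Import all_boot all_order all_fingroup.
Set Implicit Arguments. Unset Strict Implicit. Unset Printing Implicit Defensive.

(* A pattern tau in S_k is given in one-line notation as a sequence of
   naturals (e.g. [:: 1; 2; 4; 3] for 1243).
   pi : 'S_n (acting on {0,..,n-1}; its one-line notation is pi 0, ..., pi (n-1))
   contains tau if there are indices i_1 < ... < i_k (a strictly increasing
   map f : 'I_k -> 'I_n) with pi(i_a) < pi(i_b) <-> tau_a < tau_b for all a, b. *)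
Definition contains (n : nat) (pi : 'S_n) (tau : seq nat) : bool :=
  [exists f : {ffun 'I_(size tau) -> 'I_n},
     [forall a : 'I_(size tau), forall b : 'I_(size tau),
        ((a < b)%N ==> (f a < f b)%N) &&
        ((pi (f a) < pi (f b))%N == (nth 0 tau a < nth 0 tau b)%N)]].

Definition avoids (n : nat) (pi : 'S_n) (tau : seq nat) : bool :=
  ~~ contains pi tau.

(* Main.v *)
Require Import Defs.
From mathcomp Require Import all_boot all_order all_fingroup.
From mathcomp Require Import zify.
Set Implicit Arguments. Unset Strict Implicit. Unset Printing Implicit Defensive.

Definition SLS := [:: false; true; false].
Definition SSLS := [:: false; false; true; false].

Fixpoint wordsN k : seq (seq bool) :=
  if k is k'.+1 then [seq true :: w | w <- wordsN k'] ++ [seq false :: w | w <- wordsN k']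
  else [:: [::]].

Lemma cons_injb (b : bool) : injective (cons b).
Proof. by move=> ? ? []. Qed.

Lemma mem_wordsN k w : (w \in wordsN k) = (size w == k).
Proof.
elim: k w => [|k IH] [|b w] //=; rewrite mem_cat.
- by apply/negbTE; rewrite negb_or; apply/andP; split; apply/mapP => -[].
- have h1 : (false :: w \in [seq true :: w0 | w0 <- wordsN k]) = false.
    by apply/negbTE/mapP => -[].
  have h2 : (true :: w \in [seq false :: w0 | w0 <- wordsN k]) = false.
    by apply/negbTE/mapP => -[].
  case: b; rewrite ?h1 ?h2 ?orbF (mem_map (@cons_injb _)) IH //.
Qed.

Lemma uniq_wordsN k : uniq (wordsN k).
Proof.
elim: k => //= k IH; rewrite cat_uniq !(map_inj_uniq (@cons_injb _)) IH /= andbT.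
by apply/hasPn => w /mapP [w' _ ->]; apply/mapP => -[].
Qed.

Definition step (p : seq bool) (c : bool) :=
  if p is h :: p' then (if h == c then p' else p) else [::].

Definition cntw p k a :=
  count (fun w => (count_mem false w == a) && ~~ subseq p w) (wordsN k).

Lemma cntw_nil k a : cntw [::] k a = 0.
Proof. by rewrite /cntw; apply/eqP; rewrite -leqn0 leqNgt -has_count; apply/hasPn => w _; rewrite sub0seq andbF. Qed.

Lemma cntw0 p a : p != [::] -> cntw p 0 a = (a == 0).
Proof. by case: p => //= c p _; rewrite /cntw /= addn0 eq_sym; case: (a == 0). Qed.

Lemma cntwS p k a : p != [::] ->
  cntw p k.+1 a = cntw (step p true) k a + (if a is a'.+1 then cntw (step p false) k a' else 0).
Proof.
case: p => // h p _; rewrite /cntw /= count_cat !count_map; congr (_ + _).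
case: a => [|a].
  by apply/eqP; rewrite -leqn0 leqNgt -has_count; apply/hasPn => w _ /=; rewrite ?add1n.
by apply: eq_count => w /=; rewrite ?add1n ?eqSS.
Qed.

Lemma cntw_f k a : cntw [:: false] k a = (a == 0).
Proof.
elim: k a => [|k IH] a; first by rewrite cntw0.
by rewrite cntwS //= IH; case: a => [|a] //=; rewrite cntw_nil.
Qed.

Lemma cntw_tf k a : cntw [:: true; false] k a = (a <= k).
Proof.
elim: k a => [|k IH] a; first by rewrite cntw0 //; case: a.
by rewrite cntwS //= cntw_f; case: a => [|a] //=; rewrite IH.
Qed.




Lemma cntw_SLS k a : cntw SLS k a = if a == 0 then 1 else k.+1 - a.
Proof.
elim: k a => [|k IH] a; first by rewrite cntw0 //; case: a => [|[|a]].
rewrite cntwS //= IH; case: a => [|a] //=; rewrite cntw_tf; lia.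
Qed.

Lemma cntw_SSLS k a : cntw SSLS k a =
  if a == 0 then 1 else if a == 1 then k else 'C(k.+2 - a, 2).
Proof.
elim: k a => [|k IH] a; first by rewrite cntw0 //; case: a => [|[|[|a]]].
rewrite cntwS //= IH; case: a => [|[|a]] //=.
  by rewrite cntw_SLS /=; lia.
rewrite cntw_SLS /=.
case: (leqP a k) => h.
  have -> : k.+3 - a.+2 = (k - a).+1 by lia.
  have -> : k.+2 - a.+2 = k - a by lia.
  have -> : k.+1 - a.+1 = k - a by lia.
  by rewrite binS bin1.
have -> : k.+3 - a.+2 = 0 by lia.
have -> : k.+2 - a.+2 = 0 by lia.
have -> : k.+1 - a.+1 = 0 by lia.
by [].
Qed.

Fixpoint merge (w : seq bool) (L S : seq nat) : seq nat :=
  if w is b :: w' then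
    (if b then (if L is h :: L' then h :: merge w' L' S else [::])
     else (if S is h :: S' then h :: merge w' L S' else [::]))
  else [::].

Lemma merge_decomp (P : pred nat) t :
  t = merge (map P t) (filter P t) (filter (predC P) t).
Proof. by elim: t => //= v t IH; case: (P v) => /=; rewrite -IH. Qed.

Section MergeProps.
Variable P : pred nat.

Lemma merge_props w L S :
  count_mem true w = size L -> count_mem false w = size S ->
  all P L -> all (predC P) S ->
  [/\ map P (merge w L S) = w, filter P (merge w L S) = L,
      filter (predC P) (merge w L S) = S & perm_eq (merge w L S) (L ++ S)].
Proof.
elim: w L S => [|b w IH] L S /=.
  move=> cL cS _ _; case: L cL => [|? ?] //= _; case: S cS => [|? ?] //= _.
case: b => /=.
  case: L => // h L /= [cL] cS /andP[Ph aL] aS.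
  have [h1 h2 h3 h4] := IH L S cL cS aL aS.
  by rewrite Ph h1 h2 h3 /=; split => //; rewrite perm_cons.
case: S => // h S /= cL [cS] aL /andP[Ph aS].
have [h1 h2 h3 h4] := IH L S cL cS aL aS.
rewrite /= (negbTE Ph) h1 h2 h3 /=; split => //.
by rewrite -(perm_cons h) in h4; apply: (perm_trans h4); rewrite perm_sym perm_catC /= perm_cons perm_catC.
Qed.
End MergeProps.

Lemma subseq_nth_cons (T : eqType) (x0 : T) (w : seq T) i p :
  i < size w -> subseq p (drop i.+1 w) -> subseq (nth x0 w i :: p) w.
Proof.
move=> hi hp; set a := nth x0 w i.
have -> : w = take i w ++ a :: drop i.+1 w by rewrite /a -drop_nth // cat_take_drop.
rewrite -[_ :: p]cat0s; apply: cat_subseq; first exact: sub0seq.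
by rewrite /= eqxx.
Qed.

Lemma subseq_cons_nth (T : eqType) (x0 : T) (w : seq T) a p :
  subseq (a :: p) w -> exists2 i, i < size w & nth x0 w i = a /\ subseq p (drop i.+1 w).
Proof.
elim: w => //= b w IH; case: eqP => [-> h|_ /IH [i hi [h1 h2]]].
  by exists 0 => //=; rewrite drop0.
by exists i.+1.
Qed.

Lemma nth_shift (T : Type) (x0 : T) (w : seq T) i j :
  i < j -> nth x0 w j = nth x0 (drop i.+1 w) (j - i.+1).
Proof. by move=> h; rewrite nth_drop; congr nth; lia. Qed.

Lemma subseq1_pos (T : eqType) (x0 : T) (w : seq T) k :
  k < size w -> subseq [:: nth x0 w k] w.
Proof. by move=> hk; apply: subseq_nth_cons => //; apply: sub0seq. Qed.

Lemma subseq2_pos (T : eqType) (x0 : T) (w : seq T) j k :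
  j < k -> k < size w -> subseq [:: nth x0 w j; nth x0 w k] w.
Proof.
move=> hjk hk; apply: subseq_nth_cons; first lia.
by rewrite (nth_shift x0 w hjk); apply: subseq1_pos; rewrite size_drop; lia.
Qed.

Lemma subseq3_pos (T : eqType) (x0 : T) (w : seq T) i j k :
  i < j -> j < k -> k < size w ->
  subseq [:: nth x0 w i; nth x0 w j; nth x0 w k] w.
Proof.
move=> hij hjk hk; apply: subseq_nth_cons; first lia.
rewrite (nth_shift x0 w hij) (nth_shift x0 w (ltn_trans hij hjk)).
apply: subseq2_pos; rewrite ?size_drop; lia.
Qed.

Lemma subseq4_pos (T : eqType) (x0 : T) (w : seq T) i j k l :
  i < j -> j < k -> k < l -> l < size w ->
  subseq [:: nth x0 w i; nth x0 w j; nth x0 w k; nth x0 w l] w.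
Proof.
move=> hij hjk hkl hl; apply: subseq_nth_cons; first lia.
rewrite (nth_shift x0 w hij) (nth_shift x0 w (ltn_trans hij hjk)).
rewrite (nth_shift x0 w (ltn_trans hij (ltn_trans hjk hkl))).
apply: subseq3_pos; rewrite ?size_drop; lia.
Qed.

Lemma pos_subseq3 (T : eqType) (x0 : T) (w : seq T) a b c :
  subseq [:: a; b; c] w -> exists i j k, [/\ i < j, j < k, k < size w &
    [/\ nth x0 w i = a, nth x0 w j = b & nth x0 w k = c]].
Proof.
case/(subseq_cons_nth x0) => i hi [ha]; set w1 := drop i.+1 w.
case/(subseq_cons_nth x0) => j hj [hb]; set w2 := drop j.+1 w1.
case/(subseq_cons_nth x0) => k hk [hc _].
rewrite /w2 /w1 !size_drop in hj hk.
exists i, (i.+1 + j), (i.+1 + (j.+1 + k)); split; try lia.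
by split; rewrite -?ha -?hb -?hc /w2 /w1 ?nth_drop.
Qed.

Lemma pos_subseq4 (T : eqType) (x0 : T) (w : seq T) a b c d :
  subseq [:: a; b; c; d] w -> exists i j k l, [/\ i < j, j < k, k < l & l < size w] /\
    [/\ nth x0 w i = a, nth x0 w j = b, nth x0 w k = c & nth x0 w l = d].
Proof.
case/(subseq_cons_nth x0) => i hi [ha]; set w1 := drop i.+1 w => /(pos_subseq3 x0).
case=> j [k [l [hjk hkl hl [hb hc hd]]]].
rewrite /w1 size_drop in hl.
exists i, (i.+1 + j), (i.+1 + k), (i.+1 + l); split; first by split; lia.
by split; rewrite -?ha -?hb -?hc -?hd /w1 ?nth_drop.
Qed.

Definition G321 (s : seq nat) := forall i j k, i < j -> j < k -> k < size s ->
  ~~ ((nth 0 s k < nth 0 s j) && (nth 0 s j < nth 0 s i)).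
Definition G43 (s : seq nat) := forall i j k l, i < j -> j < k -> k < l -> l < size s ->
  ~~ [&& nth 0 s i < nth 0 s l, nth 0 s j < nth 0 s l & nth 0 s l < nth 0 s k].


Definition pat (x y : nat) : seq bool :=
  if (x < y) && (x == y.-1) then SSLS else SLS.

Definition smallsL x y := [seq v <- iota 0 (maxn x y) | v != minn x y].
Definition largesL n x y := iota (maxn x y).+1 (n - (maxn x y).+1).
Definition decode n x y w := x :: y :: merge w (largesL n x y) (smallsL x y).

Lemma size_smallsL x y : x != y -> size (smallsL x y) = (maxn x y).-1.
Proof.
move=> hxy; rewrite size_filter.
have := count_predC (pred1 (minn x y)) (iota 0 (maxn x y)).
rewrite size_iota count_uniq_mem ?iota_uniq // mem_iota.
have -> : (0 <= minn x y < 0 + maxn x y) = true by apply/idP; lia.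
have -> : count (predC (pred1 (minn x y))) (iota 0 (maxn x y)) =
          count (fun v => v != minn x y) (iota 0 (maxn x y)) by apply: eq_count.
lia.
Qed.

Lemma sorted_filter_pw (P : pred nat) t :
  sorted ltn (filter P t) -> pairwise (fun a b => P a ==> P b ==> (a < b)) t.
Proof.
elim: t => //= a t IH; case: ifP => Pa /=.
  move=> hp; have hs := path_sorted hp; rewrite IH // andbT.
  have := order_path_min ltn_trans hp => /allP hall.
  by apply/allP => b bt /=; rewrite ?Pa /=; apply/implyP => Pb; apply: hall; rewrite mem_filter Pb.
by move=> hs; rewrite IH // andbT; apply/allP => b _ /=; rewrite ?Pa.
Qed.

Lemma pw_sorted_filter (P : pred nat) t :
  pairwise (fun a b => P a ==> P b ==> (a < b)) t -> sorted ltn (filter P t).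
Proof.
move=> h; rewrite sorted_pairwise; last exact: ltn_trans.
elim: t h => //= a t IH /andP[ha ht]; case: ifP => Pa /=; rewrite IH // andbT.
apply/allP => b; rewrite mem_filter => /andP[Pb bt].
by have := allP ha b bt; rewrite ?Pa Pb.
Qed.

Lemma count_bool (w : seq bool) : count_mem true w + count_mem false w = size w.
Proof. by elim: w => //= -[] w IH /=; lia. Qed.

Definition pairP n x y := [&& 0 < maxn x y, maxn x y < n & ((y == 0) && (0 < x)) || (x < y)].

Section Decode.
Variables (n x y : nat) (w : seq bool).
Hypothesis hp : pairP n x y.
Hypothesis hsw : size w = n - 2.
Hypothesis hcw : count_mem false w = (maxn x y).-1.
Hypothesis hpat : ~~ subseq (pat x y) w.

Local Notation M := (maxn x y).
Local Notation P := (fun v => maxn x y < v).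
Local Notation L := (largesL n x y).
Local Notation S := (smallsL x y).
Local Notation t := (merge w (largesL n x y) (smallsL x y)).

Lemma memL v : (v \in L) = (M < v < n).
Proof. rewrite /largesL mem_iota; move: hp; rewrite /pairP; lia. Qed.

Lemma memS v : (v \in S) = (v < M) && (v != minn x y).
Proof. by rewrite /smallsL mem_filter mem_iota andbC. Qed.

Lemma dec_props : [/\ map P t = w, filter P t = L,
      filter (predC P) t = S & perm_eq t (L ++ S)].
Proof.
have hxy : x != y by move: hp; rewrite /pairP; lia.
apply: merge_props.
- have := count_bool w; rewrite hsw hcw /largesL size_iota; move: hp; rewrite /pairP; lia.
- by rewrite size_smallsL.
- by apply/allP => v; rewrite memL; lia.
- by apply/allP => v; rewrite memS /=; lia.
Qed.

Lemma memt v : (v \in t) = (M < v < n) || (v < M) && (v != minn x y).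
Proof. by case: dec_props => _ _ _ /perm_mem ->; rewrite mem_cat memL memS. Qed.

Lemma size_t : size t = n - 2.
Proof. by case: dec_props => h _ _ _; rewrite -hsw -[in RHS]h size_map. Qed.

Lemma uniq_t : uniq t.
Proof.
case: dec_props => _ _ _ /perm_uniq ->; rewrite cat_uniq /largesL iota_uniq /=.
rewrite /smallsL filter_uniq ?iota_uniq // andbT.
by apply/hasPn => v; rewrite memS memL; lia.
Qed.

Lemma tP q : q < size t -> nth false w q = (M < nth 0 t q).
Proof. by case: dec_props => h _ _ _ hq; rewrite -{1}h (nth_map 0). Qed.

Lemma tval q : q < size t ->
  (M < nth 0 t q < n) || (nth 0 t q < M) && (nth 0 t q != minn x y).
Proof. by move=> hq; rewrite -memt mem_nth. Qed.

Lemma tL q q' : q < q' -> q' < size t ->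
  (M < nth 0 t q) ==> (M < nth 0 t q') ==> (nth 0 t q < nth 0 t q').
Proof.
move=> h1 h2; case: dec_props => _ hL _ _.
have : pairwise (fun a b => P a ==> P b ==> (a < b)) t.
  by apply: sorted_filter_pw; rewrite hL /largesL iota_ltn_sorted.
move/(pairwiseP 0) => H; apply: H => //; rewrite inE; lia.
Qed.

Lemma tS q q' : q < q' -> q' < size t ->
  ~~ (M < nth 0 t q) ==> ~~ (M < nth 0 t q') ==> (nth 0 t q < nth 0 t q').
Proof.
move=> h1 h2; case: dec_props => _ _ hS _.
have : pairwise (fun a b => predC P a ==> predC P b ==> (a < b)) t.
  apply: sorted_filter_pw; rewrite hS /smallsL.
  by apply: sorted_filter; [exact: ltn_trans | exact: iota_ltn_sorted].
move/(pairwiseP 0) => H; apply: H => //; rewrite inE; lia.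
Qed.

Lemma decode_perm : perm_eq (decode n x y w) (iota 0 n).
Proof.
apply: uniq_perm; last first.
- move=> v; rewrite /decode !inE memt mem_iota.
  by move: hp; rewrite /pairP; lia.
- exact: iota_uniq.
rewrite /decode /= uniq_t andbT !inE !memt.
by move: hp; rewrite /pairP; lia.
Qed.

Lemma decode_G321 : G321 (decode n x y w).
Proof.
move=> i j k hij hjk; rewrite /decode /= size_t => hk.
have hp' := hp; rewrite /pairP in hp'.
case: j hij hjk => [//|[|j]] hij hjk.
  case: i hij => // _; case: k hjk hk => [//|[//|k]] _ hk /=; lia.
case: k hjk hk => [//|[//|k]] hjk hk /=.
have hk' : k < size t by rewrite size_t; lia.
have hj' : j < size t by lia.
have hjk' : j < k by lia.
have := tL hjk' hk'; have := tS hjk' hk'; have := tval hj'; have := tval hk'.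
case: i hij => [|[|i]] hij /=; try lia.
have hi' : i < j by lia.
have := tL hi' hj'; lia.
Qed.

Lemma decode_G43 : G43 (decode n x y w).
Proof.
move=> i j k l hij hjk hkl; rewrite /decode /= size_t => hl.
have hp' := hp; rewrite /pairP in hp'.
case: k hjk hkl => [|[|k]] hjk hkl; try lia.
case: l hkl hl => [|[|l]] hkl hl; try lia.
rewrite [nth _ _ k.+2]/= [nth _ _ l.+2]/=.
have hl' : l < size t by rewrite size_t; lia.
have hk' : k < size t by lia.
have hkl' : k < l by lia.
have := tL hkl' hl'; have := tS hkl' hl'; have := tval hk'; have := tval hl'.
have ek := tP hk'; have el := tP hl'.
case: j hij hjk => [|[|j]] hij hjk; try lia.
  by case: i hij => [|//] _ /=; lia.
rewrite [nth _ _ j.+2]/=.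
have hj' : j < size t by lia.
have hjk' : j < k by lia.
have ej := tP hj'.
move=> h1 h2 h3 h4; apply/negP => /and3P [c1 c2 c3].
have hwl : nth false w l = false by rewrite el; lia.
have hwk : nth false w k = true by rewrite ek; lia.
have hwj : nth false w j = false by rewrite ej; lia.
have hsub : subseq SLS w.
  have hlw : l < size w by rewrite hsw; lia.
  by have := subseq3_pos false hjk' hkl' hlw; rewrite hwj hwk hwl.
move: hpat; rewrite /pat.
case: i hij c1 => [|[|i]] hij /= c1.
- by case: ifP => hc; [lia | rewrite hsub].
- by case: ifP => hc; [lia | rewrite hsub].
have hi' : i < size t by lia.
have hij' : i < j by lia.
have ei := tP hi'.
have hwi : nth false w i = false by rewrite ei; lia.
have hsub2 : subseq SSLS w.
  have hlw : l < size w by rewrite hsw; lia.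
  by have := subseq4_pos false hij' hjk' hkl' hlw; rewrite hwi hwj hwk hwl.
case: ifP => _; first by rewrite hsub2.
by rewrite hsub.
Qed.

End Decode.

Lemma good_struct n s : 2 <= n -> perm_eq s (iota 0 n) -> G321 s -> G43 s ->
  exists x y w, [/\ pairP n x y, size w = n - 2, count_mem false w = (maxn x y).-1,
    ~~ subseq (pat x y) w & s = decode n x y w].
Proof.
move=> hn hperm g321 g43.
have hu : uniq s by rewrite (perm_uniq hperm) iota_uniq.
have hmem : forall v, (v \in s) = (v < n) by move=> v; rewrite (perm_mem hperm) mem_iota.
have hsz : size s = n by rewrite (perm_size hperm) size_iota.
clear hperm.
case: s => [|x [|y t]] in hu hmem hsz g321 g43 *; try (simpl in hsz; lia).
have hst : size t = n - 2 by move: hsz => /= ; lia.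
move: hu => /= /and3P [hxyt hyt hut].
have hxy : x != y by apply: contraNneq hxyt => ->; rewrite mem_head.
have hxt : x \notin t by apply: contra hxyt => h; rewrite inE h orbT.
have hx : x < n by rewrite -hmem mem_head.
have hy : y < n by rewrite -hmem !inE eqxx orbT.
have hmt : forall v, (v \in t) = [&& v < n, v != x & v != y].
  move=> v; rewrite -hmem !inE.
  case: (v =P x) => [->|_]; first by rewrite (negbTE hxt) ?eqxx /= ?andbF.
  by case: (v =P y) => [->|_] //=; [exact: negbTE hyt | rewrite andbT].
have tv : forall q, q < size t -> [&& nth 0 t q < n, nth 0 t q != x & nth 0 t q != y].
  by move=> q hq; rewrite -hmt mem_nth.
have tu : forall q q', q < size t -> q' < size t -> (nth 0 t q == nth 0 t q') = (q == q').
  by move=> q q' hq hq'; rewrite nth_uniq.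
have hA : y < x -> y = 0.
  move=> hyx; case: (posnP y) => // hy0.
  have h0 : 0 \in t by rewrite hmt; apply/and3P; split; lia.
  have hq := h0; rewrite -index_mem in hq.
  have e0 := nth_index 0 h0.
  have := g321 0 1 (index 0 t).+2 isT isT hq; rewrite /= e0; lia.
have hpair : pairP n x y by rewrite /pairP; case: (ltnP y x) => h; [have := hA h|]; lia.
have hLg : forall q q', q < q' -> q' < size t ->
    (maxn x y < nth 0 t q) ==> (maxn x y < nth 0 t q') ==> (nth 0 t q < nth 0 t q').
  move=> q q' hqq' hq'; have hq : q < size t by lia.
  have := g43 0 1 q.+2 q'.+2 isT isT hqq' hq'; rewrite /=.
  have := tu q q' hq hq'; have := tv q hq; have := tv q' hq'; lia.
have hSg : forall q q', q < q' -> q' < size t ->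
    ~~ (maxn x y < nth 0 t q) ==> ~~ (maxn x y < nth 0 t q') ==> (nth 0 t q < nth 0 t q').
  move=> q q' hqq' hq'; have hq : q < size t by lia.
  have := tu q q' hq hq'; have := tv q hq; have := tv q' hq'.
  case: (ltnP y x) => hyx.
    have := g321 0 q.+2 q'.+2 isT hqq' hq'; rewrite /=; lia.
  have := g321 1 q.+2 q'.+2 isT hqq' hq'; rewrite /=; lia.
have sL : sorted ltn (filter (fun v => maxn x y < v) t).
  apply: pw_sorted_filter; apply/(pairwiseP 0) => q q'; rewrite !inE => hq hq' hqq'.
  exact: hLg.
have sS : sorted ltn (filter (predC (fun v => maxn x y < v)) t).
  apply: pw_sorted_filter; apply/(pairwiseP 0) => q q'; rewrite !inE => hq hq' hqq'.
  exact: hSg.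
have eL : filter (fun v => maxn x y < v) t = largesL n x y.
  apply: (irr_sorted_eq ltn_trans ltnn sL); first exact: iota_ltn_sorted.
  by move=> v; rewrite mem_filter hmt /largesL mem_iota; lia.
have eS : filter (predC (fun v => maxn x y < v)) t = smallsL x y.
  apply: (irr_sorted_eq ltn_trans ltnn sS).
    by apply: sorted_filter; [exact: ltn_trans | exact: iota_ltn_sorted].
  by move=> v; rewrite mem_filter hmt /smallsL mem_filter mem_iota /=; lia.
exists x, y, (map (fun v => maxn x y < v) t); split.
- exact: hpair.
- by rewrite size_map.
- rewrite count_map -(size_smallsL hxy) -eS size_filter.
  by apply: eq_count => v /=; case: (maxn x y < v).
- apply/negP; rewrite /pat; case: ifP => hc hsub.
    have [i [j [k [l [[hij hjk hkl hl] [ei ej ek el]]]]]] := pos_subseq4 false hsub.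
    rewrite size_map in hl.
    rewrite (nth_map 0) in ei; last lia.
    rewrite (nth_map 0) in ej; last lia.
    rewrite (nth_map 0) in ek; last lia.
    rewrite (nth_map 0) in el; last lia.
    have := g43 i.+2 j.+2 k.+2 l.+2 hij hjk hkl hl; rewrite /=.
    have := hSg i l (ltn_trans hij (ltn_trans hjk hkl)) hl.
    have := hSg j l (ltn_trans hjk hkl) hl.
    have := tv l hl; have := tv k (ltn_trans hkl hl); lia.
  have [r [k [l [hrk hkl hl [er ek el]]]]] := pos_subseq3 false hsub.
  rewrite size_map in hl.
  rewrite (nth_map 0) in er; last lia.
  rewrite (nth_map 0) in ek; last lia.
  rewrite (nth_map 0) in el; last lia.
  have hrl : r < l by lia.
  case: (ltnP y x) => hyx.
    have hy0 := hA hyx.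
    have := g43 1 r.+2 k.+2 l.+2 isT hrk hkl hl; rewrite /=.
    have := hSg r l hrl hl; have := tv l hl; lia.
  have hm : y.-1 \in t by rewrite hmt; lia.
  have hm' := hm; rewrite -index_mem in hm'.
  have em := nth_index 0 hm.
  case: (ltnP k (index y.-1 t)) => hkm.
    have := g43 0 r.+2 k.+2 (index y.-1 t).+2 isT hrk hkm hm'; rewrite /= em.
    have := tu r (index y.-1 t) (ltn_trans hrk (ltn_trans hkm hm')) hm'.
    rewrite em; have := tv r (ltn_trans hrk (ltn_trans hkm hm')); lia.
  case: (ltnP (index y.-1 t) k) => hmk; last first.
    have ekm : index y.-1 t = k by lia.
    by move: ek; rewrite -ekm em; lia.
  have := hSg (index y.-1 t) l (ltn_trans hmk hkl) hl; rewrite em.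
  have := tv l hl; lia.
- by rewrite /decode -eL -eS -merge_decomp.
Qed.

Definition fpair (M z : nat) : nat * nat := if z == M then (M, 0) else (z, M).
Definition pairs n : seq (nat * nat) :=
  flatten [seq [seq fpair M z | z <- iota 0 M.+1] | M <- iota 1 n.-1].
Definition Wd n (p : nat * nat) : seq (seq bool) :=
  [seq w <- wordsN (n - 2) | (count_mem false w == (maxn p.1 p.2).-1) && ~~ subseq (pat p.1 p.2) w].
Definition Dn n : seq (seq nat) :=
  flatten [seq [seq decode n p.1 p.2 w | w <- Wd n p] | p <- pairs n].

Lemma mem_pairs n x y : ((x, y) \in pairs n) = pairP n x y.
Proof.
apply/flatten_mapP/idP => [[M hM /mapP [z hz]]|hp].
  rewrite mem_iota in hM; rewrite mem_iota in hz; rewrite /fpair /pairP.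
  by case: eqP => hzM [-> ->]; lia.
move: hp; rewrite /pairP => hp.
case: (ltnP x y) => hxy.
  exists y; first by rewrite mem_iota; lia.
  apply/mapP; exists x; first by rewrite mem_iota; lia.
  by rewrite /fpair; case: eqP => //; lia.
exists x; first by rewrite mem_iota; lia.
apply/mapP; exists x; first by rewrite mem_iota; lia.
by rewrite /fpair eqxx; congr pair; lia.
Qed.

Lemma uniq_flatten_key (T K : eqType) (key : T -> K) (s : seq K) (g : K -> seq T) :
  uniq s -> (forall k, k \in s -> uniq (g k) /\ all (fun a => key a == k) (g k)) ->
  uniq (flatten (map g s)).
Proof.
elim: s => //= k s IH /andP [ks us] H.
have [ug ag] := H k (mem_head _ _).
rewrite cat_uniq ug IH // ?andbT; last by move=> k' hk'; apply: H; rewrite inE hk' orbT.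
apply/hasPn => a /flatten_mapP [k' hk' ha].
have hk'' : k' \in k :: s by rewrite inE hk' orbT.
have [_ /allP ag'] := H k' hk''.
apply/negP => /(allP ag) /eqP e; move/eqP: (ag' a ha) => e'.
by move: ks; rewrite -e e' hk'.
Qed.

Lemma uniq_pairs n : uniq (pairs n).
Proof.
apply: (uniq_flatten_key (key := fun p => maxn p.1 p.2)); first exact: iota_uniq.
move=> M; rewrite mem_iota => hM; split.
  rewrite map_inj_in_uniq ?iota_uniq // => z1 z2; rewrite !mem_iota /fpair.
  move=> h1' h2' e; have e1 := congr1 fst e; have e2 := congr1 snd e.
  by move: e1 e2; case: eqP => h1; case: eqP => h2 /=; lia.
apply/allP => p /mapP [z]; rewrite mem_iota /fpair => hz ->.
by case: (eqVneq z M) => [e|hzM] /=; lia.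
Qed.

Lemma mem_Wd n p w : (w \in Wd n p) =
  [&& size w == n - 2, count_mem false w == (maxn p.1 p.2).-1 & ~~ subseq (pat p.1 p.2) w].
Proof. by rewrite /Wd mem_filter mem_wordsN andbC. Qed.

Lemma memD n s : (s \in Dn n) <-> exists x y w,
  [/\ pairP n x y, size w = n - 2, count_mem false w = (maxn x y).-1,
      ~~ subseq (pat x y) w & s = decode n x y w].
Proof.
split.
  move=> /flatten_mapP [[x y]]; rewrite mem_pairs => hp /mapP [w]; rewrite mem_Wd /=.
  by case/and3P => /eqP h1 /eqP h2 h3 ->; exists x, y, w; split.
move=> [x [y [w [hp h1 h2 h3 ->]]]]; apply/flatten_mapP; exists (x, y).
  by rewrite mem_pairs.
by apply/mapP; exists w => //; rewrite mem_Wd /= h1 h2 h3 !eqxx.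
Qed.

Lemma uniqD n : uniq (Dn n).
Proof.
apply: (uniq_flatten_key (key := fun s => (nth 0 s 0, nth 0 s 1))); first exact: uniq_pairs.
move=> [x y]; rewrite mem_pairs => hp; split; last first.
  by apply/allP => s /mapP [w _ ->].
rewrite map_inj_in_uniq; first by rewrite /Wd filter_uniq // uniq_wordsN.
move=> w1 w2; rewrite !mem_Wd /= => /and3P [/eqP s1 /eqP c1 p1] /and3P [/eqP s2 /eqP c2 p2].
rewrite /decode => -[] e.
case: (dec_props hp s1 c1 p1) => m1 _ _ _; case: (dec_props hp s2 c2 p2) => m2 _ _ _.
by rewrite -m1 -m2 e.
Qed.

Lemma sumn_map_flatten (A B : Type) (h : B -> nat) (g : A -> seq B) (s : seq A) :
  sumn (map h (flatten (map g s))) = sumn [seq sumn (map h (g a)) | a <- s].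
Proof. by elim: s => //= a s IH; rewrite map_cat sumn_cat IH. Qed.

Lemma size_flatten_map (A B : Type) (g : A -> seq B) (s : seq A) :
  size (flatten (map g s)) = sumn [seq size (g a) | a <- s].
Proof. by elim: s => //= a s IH; rewrite size_cat IH. Qed.

Lemma sizeD n : size (Dn n) =
  sumn [seq sumn [seq cntw (pat (fpair M z).1 (fpair M z).2) (n - 2)
                         (maxn (fpair M z).1 (fpair M z).2).-1 | z <- iota 0 M.+1] | M <- iota 1 n.-1].
Proof.
rewrite /Dn size_flatten_map.
have -> : [seq size [seq decode n p.1 p.2 w | w <- Wd n p] | p <- pairs n] =
          [seq cntw (pat p.1 p.2) (n - 2) (maxn p.1 p.2).-1 | p <- pairs n].
  by apply: eq_map => p /=; rewrite size_map /Wd size_filter.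
rewrite /pairs sumn_map_flatten; congr sumn; apply: eq_map => M.
by rewrite -map_comp.
Qed.

Lemma sumn_const (T : Type) (l : seq T) c : sumn [seq c | _ <- l] = size l * c.
Proof. by elim: l => //= _ l ->; rewrite mulSn. Qed.

Lemma sumn_map_add (T : eqType) (l : seq T) (f g h : T -> nat) :
  (forall x, x \in l -> f x = g x + h x) ->
  sumn (map f l) = sumn (map g l) + sumn (map h l).
Proof.
elim: l => //= a l IH H; rewrite H ?mem_head // IH; first lia.
by move=> x hx; apply: H; rewrite inE hx orbT.
Qed.

Definition Tn n M := M * cntw SLS (n - 2) M.-1 + cntw SSLS (n - 2) M.-1.

Lemma inner_sum n M : 0 < M ->
  sumn [seq cntw (pat (fpair M z).1 (fpair M z).2) (n - 2)
          (maxn (fpair M z).1 (fpair M z).2).-1 | z <- iota 0 M.+1] = Tn n M.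
Proof.
move=> hM; have -> : M.+1 = M.-1 + 2 by lia.
rewrite iotaD map_cat sumn_cat.
rewrite ((eq_in_map _ (fun _ => cntw SLS (n - 2) M.-1) (iota 0 M.-1)).1 _); last first.
  move=> z; rewrite mem_iota => hz; rewrite /fpair.
  case: (eqVneq z M) => [e|hzM]; first lia.
  rewrite /= /pat; have -> : (z < M) && (z == M.-1) = false by lia.
  by congr cntw; congr predn; lia.
rewrite sumn_const size_iota /= add0n (prednK hM) /fpair eqxx.
have -> : (M.-1 == M) = false by lia.
rewrite /= /pat /=.
have -> : (M.-1 < M) && (M.-1 == M.-1) = true by lia.
have -> : maxn M.-1 M = M by lia.
have -> : maxn M 0 = M by lia.
rewrite /Tn; have -> : M = M.-1.+1 by lia.
rewrite mulSn /=; lia.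
Qed.

Lemma bin2_double m : 2 * 'C(m.+1, 2) = m.+1 * m.
Proof. elim: m => // m IH; rewrite binS bin1 mulnDr IH; lia. Qed.

Lemma Tn1 n : 2 <= n -> Tn n 1 = 2.
Proof. by move=> hn; rewrite /Tn cntw_SLS cntw_SSLS. Qed.

Lemma Tn2 n : 2 <= n -> Tn n 2 = 3 * (n - 2).
Proof. move=> hn; rewrite /Tn cntw_SLS cntw_SSLS /=; lia. Qed.

Lemma Tn3 n M : 3 <= M -> M < n -> Tn n M = M * (n - M) + 'C(n - M + 1, 2).
Proof.
move=> h1 h2; rewrite /Tn cntw_SLS cntw_SSLS.
have -> : (M.-1 == 0) = false by lia.
have -> : (M.-1 == 1) = false by lia.
have -> : (n - 2).+1 - M.-1 = n - M by lia.
by have -> : (n - 2).+2 - M.-1 = n - M + 1 by lia.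
Qed.

Lemma sumD K c : sumn [seq (M == 2) * 3 + (2 < M) * c | M <- iota 1 K] = (1 < K) * 3 + (K - 2) * c.
Proof.
elim: K => // K IH.
have -> : iota 1 K.+1 = iota 1 K ++ [:: 1 + K] by rewrite -[K.+1]addn1 iotaD.
rewrite map_cat sumn_cat IH /=.
case: K IH => [|[|[|K]]] IH //=; try lia.
Qed.

Lemma arith k : sumn [seq Tn k.+2 M | M <- iota 1 k.+1] = k.+2 + 2 * 'C(k.+2, 3).
Proof.
elim: k => [|k IH]; first by rewrite /= Tn1.
have -> : iota 1 k.+2 = iota 1 k.+1 ++ [:: 1 + k.+1] by rewrite -[k.+2]addn1 iotaD.
rewrite map_cat sumn_cat.
rewrite (@sumn_map_add _ _ _ (Tn k.+2) (fun M => (M == 2) * 3 + (2 < M) * (k + 3))); last first.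
  move=> M; rewrite mem_iota => hM.
  case: M hM => [|[|[|M]]] hM; first lia.
  - by rewrite !Tn1.
  - by rewrite !Tn2 //=; lia.
  rewrite !Tn3 //; try lia.
  have -> : k.+3 - M.+3 + 1 = (k.+2 - M.+3 + 1).+1 by lia.
  rewrite binS bin1 /=; nia.
rewrite IH sumD /=.
have -> : 1 + k.+1 = k.+2 by lia.
have hC : 2 * 'C(k.+3, 3) = 2 * 'C(k.+2, 3) + k.+2 * k.+1.
  by rewrite binS mulnDr bin2_double.
rewrite hC.
case: k {IH hC} => [|k].
  by rewrite Tn2.
rewrite Tn3 //.
have -> : k.+4 - k.+3 + 1 = 2 by lia.
have -> : 'C(2, 2) = 1 by [].
have -> : (1 < k.+2) = true by [].
rewrite /= !mul1n; nia.
Qed.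

Section Bridge.
Variable m : nat.
Local Notation n := m.+1.

Definition sig (pi : 'S_n) : seq nat := mkseq (fun q => nat_of_ord (pi (inord q))) n.

Lemma size_sig pi : size (sig pi) = n.
Proof. exact: size_mkseq. Qed.

Lemma nth_sig pi q : q < n -> nth 0 (sig pi) q = pi (inord q).
Proof. by move=> hq; rewrite /sig nth_mkseq. Qed.

Lemma nth_sig_ord pi (i : 'I_n) : nth 0 (sig pi) i = pi i.
Proof. by rewrite nth_sig // inord_val. Qed.

Lemma sig_inj : injective sig.
Proof.
by move=> p1 p2 e; apply/permP => i; apply/val_inj => /=; rewrite -!nth_sig_ord e.
Qed.

Lemma sig_perm pi : perm_eq (sig pi) (iota 0 n).
Proof.
have us : uniq (sig pi).
  apply/mkseq_uniqP => q1 q2; rewrite !inE => h1 h2 e.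
  have e' := perm_inj (val_inj e).
  by have := congr1 (@nat_of_ord _) e'; rewrite !inordK.
apply: (uniq_perm us (iota_uniq _ _)).
have sub : {subset sig pi <= iota 0 n}.
  by move=> v; rewrite /sig /mkseq => /mapP [q _ ->]; rewrite mem_iota ltn_ord.
by have [] := uniq_min_size us sub; rewrite size_iota size_sig.
Qed.

Lemma sig_surj s : perm_eq s (iota 0 n) -> exists pi, sig pi = s.
Proof.
move=> hp.
have hs : size s = n by rewrite (perm_size hp) size_iota.
have hmem : forall v, (v \in s) = (v < n) by move=> v; rewrite (perm_mem hp) mem_iota.
have hu : uniq s by rewrite (perm_uniq hp) iota_uniq.
have hlt : forall i : 'I_n, nth 0 s i < n by move=> i; rewrite -hmem mem_nth // hs.
pose f := fun i : 'I_n => (inord (nth 0 s i) : 'I_n).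
have finj : injective f.
  move=> i j /(congr1 (@nat_of_ord _)); rewrite /f !inordK // => e.
  by apply/val_inj; apply/eqP; rewrite -(nth_uniq 0 _ _ hu) ?e ?hs //; exact: ltn_ord.
exists (perm finj); apply: (@eq_from_nth _ 0); rewrite ?size_sig ?hs // => q hq.
by rewrite nth_sig // permE /f inordK // inordK.
Qed.

Lemma contains_of (pi : 'S_n) tau (ps : seq nat) :
  (forall a b, a < b -> b < size tau -> nth 0 ps a < nth 0 ps b) ->
  (forall a, a < size tau -> nth 0 ps a < n) ->
  (forall a b, a < size tau -> b < size tau ->
     (nth 0 (sig pi) (nth 0 ps a) < nth 0 (sig pi) (nth 0 ps b)) = (nth 0 tau a < nth 0 tau b)) ->
  contains pi tau.
Proof.
move=> hinc hlt hcmp; apply/existsP.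
exists [ffun a : 'I_(size tau) => (inord (nth 0 ps a) : 'I_n)].
apply/forallP => a; apply/forallP => b; rewrite !ffunE !inordK ?hlt //.
rewrite -!nth_sig ?inordK ?hlt //; apply/andP; split.
  by apply/implyP => hab; apply: hinc.
by apply/eqP; apply: hcmp.
Qed.

Lemma contains_to (pi : 'S_n) tau : contains pi tau -> exists ps : seq nat,
  [/\ (forall a b, a < b -> b < size tau -> nth 0 ps a < nth 0 ps b),
      (forall a, a < size tau -> nth 0 ps a < n) &
      (forall a b, a < size tau -> b < size tau ->
        (nth 0 (sig pi) (nth 0 ps a) < nth 0 (sig pi) (nth 0 ps b)) = (nth 0 tau a < nth 0 tau b))].
Proof.
move=> /existsP [f /forallP H].
exists [seq nat_of_ord (f a) | a <- enum 'I_(size tau)].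
have hn : forall a (ha : a < size tau), nth 0 [seq nat_of_ord (f a) | a <- enum 'I_(size tau)] a
                    = f (Ordinal ha).
  move=> a ha; rewrite (nth_map (Ordinal ha)) ?size_enum_ord //; congr (nat_of_ord (f _)).
  by apply/val_inj; rewrite /= nth_enum_ord.
split.
- move=> a b hab hb; have ha : a < size tau by lia.
  rewrite (hn a ha) (hn b hb).
  by have /andP [/implyP h _] := forallP (H (Ordinal ha)) (Ordinal hb); apply: h.
- by move=> a ha; rewrite (hn a ha).
- move=> a b ha hb; rewrite (hn a ha) (hn b hb) !nth_sig_ord.
  by have /andP [_ /eqP h] := forallP (H (Ordinal ha)) (Ordinal hb).
Qed.

Lemma avoid321 (pi : 'S_n) : avoids pi [:: 3; 2; 1] <-> G321 (sig pi).
Proof.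
split.
  move=> hav i j k hij hjk; rewrite size_sig => hk.
  apply/negP => /andP [h1 h2]; move/negP: hav; apply.
  apply: (@contains_of _ _ [:: i; j; k]).
  - by move=> [|[|[|a]]] [|[|[|b]]] //=; lia.
  - by move=> [|[|[|a]]] //=; lia.
  - by move=> [|[|[|a]]] [|[|[|b]]] //=; lia.
move=> hG; apply/negP => /contains_to [ps [hinc hlt hcmp]].
have := hG (nth 0 ps 0) (nth 0 ps 1) (nth 0 ps 2) (hinc 0 1 isT isT) (hinc 1 2 isT isT).
rewrite size_sig => /(_ (hlt 2 isT)).
have := hcmp 1 0 isT isT; have := hcmp 2 1 isT isT; rewrite /=; lia.
Qed.

Lemma avoid43 (pi : 'S_n) :
  avoids pi [:: 1; 2; 4; 3] && avoids pi [:: 2; 1; 4; 3] <-> G43 (sig pi).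
Proof.
split.
  move=> /andP [hav1 hav2] i j k l hij hjk hkl; rewrite size_sig => hl.
  apply/negP => /and3P [h1 h2 h3].
  have hij' : nth 0 (sig pi) i != nth 0 (sig pi) j.
    rewrite !nth_sig; try lia.
    apply/negP => /eqP /val_inj /perm_inj /(congr1 (@nat_of_ord _)); rewrite !inordK; lia.
  case: (ltnP (nth 0 (sig pi) i) (nth 0 (sig pi) j)) => hc.
    move/negP: hav1; apply; apply: (@contains_of _ _ [:: i; j; k; l]).
    - by move=> [|[|[|[|a]]]] [|[|[|[|b]]]] //=; lia.
    - by move=> [|[|[|[|a]]]] //=; lia.
    - by move=> [|[|[|[|a]]]] [|[|[|[|b]]]] //=; lia.
  move/negP: hav2; apply; apply: (@contains_of _ _ [:: i; j; k; l]).
  - by move=> [|[|[|[|a]]]] [|[|[|[|b]]]] //=; lia.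
  - by move=> [|[|[|[|a]]]] //=; lia.
  - by move=> [|[|[|[|a]]]] [|[|[|[|b]]]] //=; lia.
move=> hG; apply/andP; split; apply/negP => /contains_to [ps [hinc hlt hcmp]].
  have := hG (nth 0 ps 0) (nth 0 ps 1) (nth 0 ps 2) (nth 0 ps 3)
    (hinc 0 1 isT isT) (hinc 1 2 isT isT) (hinc 2 3 isT isT).
  rewrite size_sig => /(_ (hlt 3 isT)).
  have := hcmp 0 3 isT isT; have := hcmp 1 3 isT isT; have := hcmp 3 2 isT isT; rewrite /=; lia.
have := hG (nth 0 ps 0) (nth 0 ps 1) (nth 0 ps 2) (nth 0 ps 3)
  (hinc 0 1 isT isT) (hinc 1 2 isT isT) (hinc 2 3 isT isT).
rewrite size_sig => /(_ (hlt 3 isT)).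
have := hcmp 0 3 isT isT; have := hcmp 1 3 isT isT; have := hcmp 3 2 isT isT; rewrite /=; lia.
Qed.

End Bridge.

Theorem corollary3p10 (n : nat) : (1 <= n)%N ->
  #|[set pi : 'S_n | [&& avoids pi [:: 1; 2; 4; 3],
                         avoids pi [:: 2; 1; 4; 3] &
                         avoids pi [:: 3; 2; 1]]]| = n + 2 * 'C(n, 3).
Proof.
case: n => [//|m] _.
case: m => [|k].
  have -> : [set pi : 'S_1 | [&& avoids pi [:: 1; 2; 4; 3], avoids pi [:: 2; 1; 4; 3]
                               & avoids pi [:: 3; 2; 1]]] = setT.
    apply/setP => pi; rewrite !inE.
    by apply/and3P; split; apply/negP => /contains_to [ps [hinc hlt _]];
      have := hinc 0 1 isT isT; have := hlt 1 isT; lia.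
  by rewrite cardsT card_Sn.
set A := [set pi : 'S_k.+2 | _].
have hP : forall pi : 'S_k.+2, (pi \in A) <-> G321 (sig pi) /\ G43 (sig pi).
  move=> pi; rewrite inE; split.
    move=> /and3P [h1 h2 h3]; split; first exact/avoid321.
    by apply/avoid43; rewrite h1 h2.
  move=> [g1 g2]; have /andP [h1 h2] := (avoid43 pi).2 g2.
  by apply/and3P; split => //; apply/avoid321.
have hperm : perm_eq (map (@sig k.+1) (enum A)) (Dn k.+2).
  apply: uniq_perm; first by rewrite (map_inj_uniq (@sig_inj k.+1)) enum_uniq.
    exact: uniqD.
  move=> s; apply/mapP/idP.
    move=> [pi hpi ->]; rewrite mem_enum in hpi.
    have [g1 g2] := (hP pi).1 hpi.
    have [x [y [w [hp h1 h2 h3 e]]]] := @good_struct k.+2 _ isT (sig_perm pi) g1 g2.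
    by apply/memD; exists x, y, w; split.
  move=> hs; have [x [y [w [hp h1 h2 h3 ->]]]] := (memD _ _).1 hs.
  have pe := decode_perm hp h1 h2 h3.
  have [pi epi] := sig_surj pe.
  exists pi; last by rewrite epi.
  rewrite mem_enum; apply/(hP pi).2; rewrite epi; split.
    exact: decode_G321.
  exact: decode_G43.
rewrite cardE -(size_map (@sig k.+1)) (perm_size hperm) sizeD.
rewrite ((eq_in_map _ (Tn k.+2) (iota 1 k.+1)).1 _); first exact: arith.
by move=> M; rewrite mem_iota => hM; apply: inner_sum; lia.
Qed.
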